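(* Let $d$ be a degree sequence with complementary sequence $\overline d$. Then $\Delta_{m(\overline d)}(\overline d)=\Delta_{m(d)}(d)$; that is, the last principal Erdős–Gallai differences of $d$ and $\overline d$ coincide.
   Context: Degree sequences $d=(d_1,\dots,d_n)$ (of finite simple graphs, terms may be $0$) are listed in nonincreasing order; $\overline d=(n-1-d_n,\dots,n-1-d_1)$ is the complementary sequence. $m(d)=\max\{i : d_i\ge i-1\}$. For integers $k\ge 0$, $\Delta_k(d)=k(k-1)+\sum_{i>k}\min\{k,d_i\}-\sum_{i\le k}d_i$. *)

(* Defs.v *)
From mathcomp Require Import all_boot all_order all_algebra.
Set Implicit Arguments. Unset Strict Implicit. Unset Printing Implicit Defensive.
Import GRing.Theory Num.Theory.

(* A sequence d = (d_1,...,d_n) is stored as d : seq nat with d_i = nth 0 d (i-1). *)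

Definition is_degree_sequence (d : seq nat) : Prop :=
  sorted geq d /\
  exists e : rel 'I_(size d),
    symmetric e /\ irreflexive e /\
    forall i : 'I_(size d), #|[set j | e i j]| = nth 0 d i.

Definition compl_seq (d : seq nat) : seq nat :=
  [seq (size d).-1 - x | x <- rev d].

(* m(d) = max { i in 1..n : d_i >= i - 1 } (0 if n = 0) *)
Definition mEG (d : seq nat) : nat :=
  \max_(1 <= i < (size d).+1 | i.-1 <= nth 0 d i.-1) i.

Definition DeltaEG (k : nat) (d : seq nat) : int :=
  ((k * k.-1)%:Z
   + (\sum_(k <= i < size d) minn k (nth 0 d i))%:Z
   - (\sum_(0 <= i < k) nth 0 d i)%:Z)%R.

(* Main.v *)
Require Import Defs.
From mathcomp Require Import all_boot all_order all_algebra.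
From mathcomp Require Import zify.

Definition mono (s : seq nat) := forall p q, p <= q -> q < size s -> nth 0 s q <= nth 0 s p.

Lemma mEG_le s : mEG s <= size s.
Proof.
rewrite /mEG; apply/bigmax_leqP_seq => i; rewrite mem_index_iota; lia.
Qed.

Lemma mEG_upper s i : 1 <= i <= size s -> i.-1 <= nth 0 s i.-1 -> i <= mEG s.
Proof.
move=> Hi Hc; rewrite /mEG.
apply: (leq_bigmax_seq (F:=fun i => i) (P:=fun i => i.-1 <= nth 0 s i.-1)) => //; rewrite mem_index_iota; lia.
Qed.

Lemma mEG_hi s p : mEG s <= p -> p < size s -> nth 0 s p < p.
Proof.
move=> H1 H2; rewrite ltnNge; apply/negP => H.
have := @mEG_upper s p.+1; rewrite /= H2 => /(_ isT H); lia.
Qed.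

Lemma mEG_lo s p : mono s -> p < mEG s -> p <= nth 0 s p.
Proof.
move=> Hm H; rewrite leqNgt; apply/negP => Hlt.
suff : mEG s <= p by lia.
rewrite /mEG; apply/bigmax_leqP_seq => i; rewrite mem_index_iota => Hi Hc.
rewrite leqNgt; apply/negP => Hpi.
have := Hm p i.-1; have := mEG_le s; lia.
Qed.

Definition F (s : seq nat) (j : nat) : int :=
  ((j * j.-1)%:Z + (\sum_(j <= i < size s) nth 0 s i)%:Z
   - (\sum_(0 <= i < j) nth 0 s i)%:Z)%R.

Lemma DeltaF s : mono s -> DeltaEG (mEG s) s = F s (mEG s).
Proof.
move=> Hm; rewrite /DeltaEG /F; congr (_ + _%:Z - _)%R.
apply: eq_big_nat => i /andP[H1 H2]; apply/minn_idPr.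
have := Hm _ _ H1 H2; have := @mEG_hi s _ (leqnn _) (leq_ltn_trans H1 H2); lia.
Qed.

Lemma nth_compl d p : p < size d ->
  nth 0 (compl_seq d) p = (size d).-1 - nth 0 d ((size d).-1 - p).
Proof.
move=> Hp; rewrite /compl_seq (nth_map 0) ?size_rev // nth_rev //.
congr (_ - nth 0 d _); lia.
Qed.

Lemma size_compl d : size (compl_seq d) = size d.
Proof. by rewrite size_map size_rev. Qed.

Lemma compl_mono d : mono d -> mono (compl_seq d).
Proof.
move=> Hm p q Hpq; rewrite size_compl => Hq.
rewrite !nth_compl //; last lia.
have := Hm ((size d).-1 - q) ((size d).-1 - p); lia.
Qed.

Lemma sum_compl d j : (forall p, p < size d -> nth 0 d p <= (size d).-1) ->
  j <= size d ->
  ((\sum_(0 <= i < j) nth 0 (compl_seq d) i)%:Z =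
  ((j * (size d).-1)%:Z - (\sum_(size d - j <= i < size d) nth 0 d i)%:Z))%R.
Proof.
move=> B; elim: j => [|j IH] Hj.
  by rewrite !big_geq ?subn0 //= mul0n.
rewrite big_nat_recr //= PoszD IH; last lia.
rewrite nth_compl; last lia.
have -> : size d - j = (size d - j.+1).+1 by lia.
rewrite [X in _ = (_ - X%:Z)%R]big_ltn; last lia.
have -> : (size d).-1 - j = size d - j.+1 by lia.
have := B (size d - j.+1); rewrite PoszD.
move: (\sum_(_ <= i < _) _) => S.
move: (nth 0 d _) => x Hx.
have {}Hx : x <= (size d).-1 by apply: Hx; lia.
rewrite mulSn PoszD. lia.
Qed.

Lemma FC d : (forall p, p < size d -> nth 0 d p <= (size d).-1) ->
  forall l, l <= size d -> F (compl_seq d) l = F d (size d - l).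
Proof.
move=> B l Hl; rewrite /F size_compl.
have E1 := @sum_compl d _ B (leqnn (size d)).
have E2 := @sum_compl d _ B Hl.
have E3 : (\sum_(0 <= i < size d) nth 0 (compl_seq d) i =
   \sum_(0 <= i < l) nth 0 (compl_seq d) i + \sum_(l <= i < size d) nth 0 (compl_seq d) i).
  by rewrite -big_cat_nat.
have E4 : (\sum_(0 <= i < size d) nth 0 d i =
   \sum_(0 <= i < size d - l) nth 0 d i + \sum_(size d - l <= i < size d) nth 0 d i).
  by rewrite -big_cat_nat // leq_subr.
rewrite subnn in E1.
move: E1 E2.
rewrite E3 E4.
set a := \sum_(0 <= i < l) nth 0 (compl_seq d) i.
set b := \sum_(l <= i < size d) nth 0 (compl_seq d) i.
set c := \sum_(0 <= i < size d - l) nth 0 d i.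
set e := \sum_(size d - l <= i < size d) nth 0 d i.
clearbody a b c e; clear E3 E4 B.
move: (size d) Hl => n Hl.
have [m ->] : exists m, n = l + m by exists (n - l); lia.
rewrite addKn.
case: l {Hl} => [|l]; case: m => [|m] /=; nia.
Qed.

Lemma Fstep d k : k < size d -> nth 0 d k = k -> F d k = F d k.+1.
Proof.
move=> Hk Hd; rewrite /F big_nat_recr //= [in LHS]big_ltn // Hd.
move: (\sum_(k.+1 <= i < _) _) (\sum_(0 <= i < k) _) => a b.
case: k {Hk Hd} => [|k] /=; nia.
Qed.

Theorem corollary7 (d : seq nat) :
  is_degree_sequence d ->
  DeltaEG (mEG (compl_seq d)) (compl_seq d) = DeltaEG (mEG d) d.
Proof.
move=> [Hs [e [Hsym [Hirr Hdeg]]]].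
have Hm : mono d.
  move=> p q Hpq Hq.
  have Ht : transitive geq by move=> x y z /= H1 H2; apply: leq_trans H2 H1.
  have Hr : reflexive geq by move=> x /=.
  have := sorted_leq_nth Ht Hr 0 Hs; apply; rewrite ?inE //; lia.
have B : forall p, p < size d -> nth 0 d p <= (size d).-1.
  move=> p Hp; rewrite -(Hdeg (Ordinal Hp)) -[X in _ <= X.-1](card_ord (size d)) -(cardsC1 (Ordinal Hp)).
  apply: subset_leq_card; apply/subsetP => j; rewrite !inE => H.
  by apply/eqP => Hj; rewrite Hj Hirr in H.
rewrite !DeltaF //; last exact: compl_mono.
rewrite FC //; last by rewrite -size_compl mEG_le.
have hk := mEG_le d.
have hl := mEG_le (compl_seq d); rewrite size_compl in hl.
set k := mEG d in hk *; set l := mEG (compl_seq d) in hl *.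
have H1 : size d - l <= k.
  rewrite leqNgt; apply/negP => Hlt.
  have := @mEG_hi (compl_seq d) l (leqnn _); rewrite size_compl nth_compl; last lia.
  move=> /(_ ltac:(lia)).
  have := @mEG_hi d ((size d).-1 - l) ltac:(lia) ltac:(lia).
  have := B ((size d).-1 - l) ltac:(lia).
  lia.
have [->//|Hne] := eqVneq (size d - l) k.
have Hk1 : k.-1 <= nth 0 d k.-1 by apply: mEG_lo => //; lia.
have Hc : size d - k <= nth 0 (compl_seq d) (size d - k).
  apply: mEG_lo; [exact: compl_mono | lia].
rewrite nth_compl in Hc; last lia.
have E : (size d).-1 - (size d - k) = k.-1 by lia.
rewrite E in Hc.
have Hb := B k.-1 ltac:(lia).
have H2 : size d - l = k.-1.
  apply/eqP; rewrite eqn_leq; apply/andP; split; first lia.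
  rewrite leqNgt; apply/negP => Hlt.
  have Hc2 : size d - k.-1 <= nth 0 (compl_seq d) (size d - k.-1).
    apply: mEG_lo; [exact: compl_mono | lia].
  rewrite nth_compl in Hc2; last lia.
  have E2 : (size d).-1 - (size d - k.-1) = k.-2 by lia.
  rewrite E2 in Hc2.
  have := Hm k.-2 k.-1 ltac:(lia) ltac:(lia).
  have := B k.-2 ltac:(lia).
  lia.
rewrite H2 Fstep; last lia; last lia.
by have -> : k.-1.+1 = k by lia.
Qed.
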